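(* Let $n\ge2$ and $\mathbf{a}=(a_1,\dots,a_n)\in\Delta^{(n)}$. Define $q_i=a_1+\cdots+a_i+(n-i)a_i$ for $1\le i\le n$ and $q_{n-1+i}=(i-1)a_i+a_i+\cdots+a_n$ for $1\le i\le n$ (these two definitions agree at $q_n=1$; and $q_1=na_1$, $q_{2n-1}=na_n$). Let $\mathbf{P}=(P_1,\dots,P_n)\colon[na_1,na_n]\to\mathbb{R}^n$ be the continuous map such that: (i) for $1\le i\le n-1$ and $q\in[q_i,q_{i+1}]$: $P_k(q)=a_k$ for $k\le i$, and $P_{i+1}(q)=\cdots=P_n(q)=a_i+(q-q_i)/(n-i)$; (ii) for $1\le i\le n-1$ and $q\in[q_{n-1+i},q_{n+i}]$: $P_1(q)=\cdots=P_i(q)=a_i+(q-q_{n-1+i})/i$, and $P_k(q)=a_k$ for $k\ge i+1$. Then $\mathbf{P}$ is a generalized $n$-system on $[na_1,na_n]$ and, for each $j=1,\dots,n-1$, \[ \inf_{q\in[na_1,na_n]}\psi_j\big(q^{-1}\mathbf{P}(q)\big)=\psi_j(\mathbf{a})\quad\text{and}\quad \sup_{q\in[na_1,na_n]}\psi_j\big(q^{-1}\mathbf{P}(q)\big)=\frac{j}{n}. \]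
   Context: $\Delta^{(n)}=\{(a_1,\dots,a_n)\in\mathbb{R}^n: 0<a_1<\cdots<a_n,\ a_1+\cdots+a_n=1\}$ and $\bar\Delta^{(n)}=\{(a_1,\dots,a_n)\in\mathbb{R}^n: 0\le a_1\le\cdots\le a_n,\ a_1+\cdots+a_n=1\}$. For $j=1,\dots,n$, $\psi_j\colon\bar\Delta^{(n)}\to\mathbb{R}$ is $\psi_j(a_1,\dots,a_n)=a_1+\cdots+a_j$. A map $\mathbf{P}\colon I\to\mathbb{R}^n$ on an interval $I\subseteq[0,\infty)$ with non-empty interior is continuous piecewise linear if it is continuous, the set of points of $I$ where it is not differentiable (including endpoints of $I$ lying in $I$) is discrete in $I$, and its derivative is locally constant off that set. A generalized $n$-system on $I$ is a continuous piecewise linear map $\mathbf{P}=(P_1,\dots,P_n)\colon I\to\mathbb{R}^n$ such that: (G1) for each $q\in I$, $0\le P_1(q)\le\cdots\le P_n(q)$ and $P_1(q)+\cdots+P_n(q)=q$; (G2) on each non-empty open subinterval $H$ of $I$ on which $\mathbf{P}$ is differentiable, there are integers $1\le \underline{r}\le\overline{r}\le n$ such that $P_{\underline r},\dots,P_{\overline r}$ coincide on $H$ and have slope $1/(\overline r-\underline r+1)$, while every other $P_j$ is constant on $H$; (G3) if $q$ is an interior point of $I$ where $\mathbf{P}$ is not differentiable, and $\underline r,\overline r,\underline s,\overline s$ are the integers with $P_j'(q^-)=1/(\overline r-\underline r+1)$ for $\underline r\le j\le\overline r$ and $P_j'(q^+)=1/(\overline s-\underline s+1)$ for $\underline s\le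 j\le \overline s$, and if $\underline r<\overline s$, then $P_{\underline r}(q)=\cdots=P_{\overline s}(q)$. *)

(* Defs.v *)
From Stdlib Require Import Reals Lra Lia.
Open Scope R_scope.

(* Vectors of R^n are encoded as functions nat -> R, using indices 1..n. *)

Fixpoint sum_to (f : nat -> R) (m : nat) : R :=
  match m with
  | O => 0
  | S p => sum_to f p + f (S p)
  end.

(* sum_range f m p = f m + ... + f p  (for 1 <= m <= p+1) *)
Definition sum_range (f : nat -> R) (m p : nat) : R :=
  sum_to f p - sum_to f (m - 1).

Definition in_Delta (n : nat) (a : nat -> R) : Prop :=
  0 < a 1%nat /\
  (forall k, (1 <= k)%nat -> (k < n)%nat -> a k < a (S k)) /\
  sum_to a n = 1.

Definition psi (j : nat) (v : nat -> R) : R := sum_to v j.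

Definition left_deriv (f : R -> R) (q l : R) : Prop :=
  forall eps, 0 < eps -> exists delta, 0 < delta /\
    forall t, q - delta < t < q -> Rabs ((f t - f q) / (t - q) - l) < eps.

Definition right_deriv (f : R -> R) (q l : R) : Prop :=
  forall eps, 0 < eps -> exists delta, 0 < delta /\
    forall t, q < t < q + delta -> Rabs ((f t - f q) / (t - q) - l) < eps.

(* P q k is the k-th coordinate P_k(q), 1 <= k <= n. *)

Definition inI (A B q : R) : Prop := A <= q <= B.

Definition diff_at (n : nat) (P : R -> nat -> R) (q : R) : Prop :=
  forall k, (1 <= k <= n)%nat -> exists l, derivable_pt_lim (fun t => P t k) q l.

Definition nondiff_pt (n : nat) (A B : R) (P : R -> nat -> R) (q : R) : Prop :=
  inI A B q /\ (q = A \/ q = B \/ ~ diff_at n P q).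

Definition cont_pw_linear (n : nat) (A B : R) (P : R -> nat -> R) : Prop :=
  (forall k, (1 <= k <= n)%nat -> forall q, inI A B q ->
     forall eps, 0 < eps -> exists delta, 0 < delta /\
       forall t, inI A B t -> Rabs (t - q) < delta -> Rabs (P t k - P q k) < eps) /\
  (forall x, inI A B x -> exists eps, 0 < eps /\
     forall t, inI A B t -> 0 < Rabs (t - x) < eps -> ~ nondiff_pt n A B P t) /\
  (forall q, inI A B q -> ~ nondiff_pt n A B P q -> exists eps, 0 < eps /\
     forall t, Rabs (t - q) < eps ->
       forall k, (1 <= k <= n)%nat -> forall l,
         derivable_pt_lim (fun s => P s k) q l -> derivable_pt_lim (fun s => P s k) t l).

Definition gen_n_system (n : nat) (A B : R) (P : R -> nat -> R) : Prop :=
  cont_pw_linear n A B P /\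
  (forall q, inI A B q ->
     0 <= P q 1%nat /\
     (forall k, (1 <= k)%nat -> (k < n)%nat -> P q k <= P q (S k)) /\
     sum_to (P q) n = q) /\
  (forall c d, A <= c -> c < d -> d <= B ->
     (forall t, c < t < d -> diff_at n P t) ->
     exists r1 r2, (1 <= r1)%nat /\ (r1 <= r2)%nat /\ (r2 <= n)%nat /\
       (forall k t, (r1 <= k <= r2)%nat -> c < t < d -> P t k = P t r1) /\
       (forall k t, (r1 <= k <= r2)%nat -> c < t < d ->
          derivable_pt_lim (fun s => P s k) t (1 / INR (r2 - r1 + 1))) /\
       (forall k t t', (1 <= k <= n)%nat -> ~ (r1 <= k <= r2)%nat ->
          c < t < d -> c < t' < d -> P t k = P t' k)) /\
  (forall q, A < q < B -> ~ diff_at n P q ->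
     forall r1 r2 s1 s2,
       (1 <= r1)%nat -> (r1 <= r2)%nat -> (r2 <= n)%nat ->
       (1 <= s1)%nat -> (s1 <= s2)%nat -> (s2 <= n)%nat ->
       (forall j, (r1 <= j <= r2)%nat ->
          left_deriv (fun s => P s j) q (1 / INR (r2 - r1 + 1))) ->
       (forall j, (s1 <= j <= s2)%nat ->
          right_deriv (fun s => P s j) q (1 / INR (s2 - s1 + 1))) ->
       (r1 < s2)%nat ->
       forall j, (r1 <= j <= s2)%nat -> P q j = P q r1).

Definition qlow (n : nat) (a : nat -> R) (i : nat) : R :=
  sum_to a i + INR (n - i) * a i.
(* q_{n-1+i} for 1 <= i <= n *)
Definition qhigh (n : nat) (a : nat -> R) (i : nat) : R :=
  INR (i - 1) * a i + sum_range a i n.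

Definition P_conditions (n : nat) (a : nat -> R) (P : R -> nat -> R) : Prop :=
  (forall i, (1 <= i)%nat -> (i <= n - 1)%nat ->
     forall q, qlow n a i <= q <= qlow n a (S i) ->
       (forall k, (1 <= k <= i)%nat -> P q k = a k) /\
       (forall k, (i + 1 <= k <= n)%nat -> P q k = a i + (q - qlow n a i) / INR (n - i))) /\
  (forall i, (1 <= i)%nat -> (i <= n - 1)%nat ->
     forall q, qhigh n a i <= q <= qhigh n a (S i) ->
       (forall k, (1 <= k <= i)%nat -> P q k = a i + (q - qhigh n a i) / INR i) /\
       (forall k, (i + 1 <= k <= n)%nat -> P q k = a k)).

Definition is_glb (E : R -> Prop) (m : R) : Prop :=
  (forall x, E x -> m <= x) /\ (forall b, (forall x, E x -> b <= x) -> b <= m).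

(* Main.v *)
Require Import Defs.
From Stdlib Require Import Reals Lra Lia Classical.
Open Scope R_scope.

Lemma sum_to_ext f g m : (forall k, (1 <= k <= m)%nat -> f k = g k) -> sum_to f m = sum_to g m.
Proof. induction m; simpl; intros H; auto. rewrite IHm by (intros; apply H; lia). rewrite H by lia. reflexivity. Qed.

Lemma sum_to_le f g m : (forall k, (1 <= k <= m)%nat -> f k <= g k) -> sum_to f m <= sum_to g m.
Proof. induction m; simpl; intros H; [lra|]. assert (H1 := H (S m) ltac:(lia)). assert (sum_to f m <= sum_to g m) by (apply IHm; intros; apply H; lia). lra. Qed.

Lemma sum_to_scal c f m : sum_to (fun k => c * f k) m = c * sum_to f m.
Proof. induction m; simpl; [ring|]. rewrite IHm. ring. Qed.

Lemma sum_to_const c m : sum_to (fun _ => c) m = INR m * c.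
Proof. induction m; simpl sum_to; [simpl; ring|]. rewrite IHm, S_INR. ring. Qed.

Lemma sum_tail_le f g j d : (forall k, (j < k <= j + d)%nat -> f k <= g k) ->
  sum_to f (j + d) - sum_to f j <= sum_to g (j + d) - sum_to g j.
Proof. induction d; intros H. { rewrite Nat.add_0_r. lra. }
  rewrite Nat.add_succ_r. simpl. assert (H1 := H (S (j+d)) ltac:(lia)).
  assert (sum_to f (j + d) - sum_to f j <= sum_to g (j + d) - sum_to g j) by (apply IHd; intros; apply H; lia). lra. Qed.

Lemma sum_tail_ext f g j d : (forall k, (j < k <= j + d)%nat -> f k = g k) ->
  sum_to f (j + d) - sum_to f j = sum_to g (j + d) - sum_to g j.
Proof. intros H. apply Rle_antisym; apply sum_tail_le; intros k Hk; rewrite H by lia; lra. Qed.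

Lemma sum_tail_const f c j d : (forall k, (j < k <= j + d)%nat -> f k = c) ->
  sum_to f (j + d) - sum_to f j = INR d * c.
Proof. induction d; intros H. { rewrite Nat.add_0_r. simpl. lra. }
  rewrite Nat.add_succ_r. simpl sum_to. rewrite H by lia. rewrite S_INR.
  assert (sum_to f (j + d) - sum_to f j = INR d * c) by (apply IHd; intros; apply H; lia). lra. Qed.

Lemma mono_le (v : nat -> R) n : (forall k, (1 <= k)%nat -> (k < n)%nat -> v k <= v (S k)) ->
  forall k k', (1 <= k)%nat -> (k <= k')%nat -> (k' <= n)%nat -> v k <= v k'.
Proof. intros H k k' H1 H2 H3. replace k' with (k + (k' - k))%nat by lia.
  assert (forall d, (k + d <= n)%nat -> v k <= v (k + d)%nat). { induction d; intros Hd. rewrite Nat.add_0_r; lra.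
   rewrite Nat.add_succ_r. specialize (H (k + d)%nat ltac:(lia) ltac:(lia)). assert (v k <= v (k+d)%nat) by (apply IHd; lia). lra. }
  apply H0; lia. Qed.

Lemma mono_lt (v : nat -> R) n : (forall k, (1 <= k)%nat -> (k < n)%nat -> v k < v (S k)) ->
  forall k k', (1 <= k)%nat -> (k < k')%nat -> (k' <= n)%nat -> v k < v k'.
Proof. intros H k k' H1 H2 H3. replace k' with (S k + (k' - S k))%nat by lia.
  assert (forall d, (S k + d <= n)%nat -> v k < v (S k + d)%nat). { induction d; intros Hd. rewrite Nat.add_0_r; apply H; lia.
   rewrite Nat.add_succ_r. specialize (H (S k + d)%nat ltac:(lia) ltac:(lia)). assert (v k < v (S k+d)%nat) by (apply IHd; lia). lra. }
  apply H0; lia. Qed.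

Lemma d_affine f t c b sl u v : u < t < v -> (forall s, u < s < v -> f s = c + sl*(s-b)) ->
  derivable_pt_lim f t sl.
Proof. intros Ht H eps Heps.
  assert (Hp : 0 < Rmin (t-u) (v-t)) by (apply Rmin_pos; lra).
  exists (mkposreal _ Hp). intros h Hh0 Hh. simpl in Hh.
  assert (Hm1 := Rmin_l (t-u) (v-t)). assert (Hm2 := Rmin_r (t-u) (v-t)).
  apply Rabs_def2 in Hh.
  rewrite (H (t+h)) by lra. rewrite (H t) by lra.
  replace ((c + sl * (t + h - b) - (c + sl * (t - b))) / h - sl) with 0 by (field; auto).
  rewrite Rabs_R0; lra. Qed.

Lemma Rabs_lt_iff x e : Rabs x < e -> -e < x < e.
Proof. intros H. apply Rabs_def2 in H. lra. Qed.

Lemma Rabs_pos_neq x : x <> 0 -> 0 < Rabs x.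
Proof. intros. apply Rabs_pos_lt; auto. Qed.

Lemma kink f q u v c1 b1 s1 c2 b2 s2 l : u < q < v ->
  (forall s, u <= s <= q -> f s = c1 + s1*(s-b1)) ->
  (forall s, q <= s <= v -> f s = c2 + s2*(s-b2)) -> s1 <> s2 ->
  ~ derivable_pt_lim f q l.
Proof. intros Hq H1 H2 Hne D.
  assert (He : 0 < Rabs (s1 - s2) / 2) by (assert (0 < Rabs (s1 - s2)) by (apply Rabs_pos_neq; lra); lra).
  destruct (D _ He) as [[d Hd] Hdel]. simpl in Hdel.
  set (h1 := Rmin (d/2) ((v-q)/2)). set (h2 := - Rmin (d/2) ((q-u)/2)).
  assert (0 < h1) by (apply Rmin_pos; lra). assert (h1 <= d/2) by apply Rmin_l. assert (h1 <= (v-q)/2) by apply Rmin_r.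
  assert (0 < - h2) by (unfold h2; rewrite Ropp_involutive; apply Rmin_pos; lra).
  assert (-h2 <= d/2) by (unfold h2; rewrite Ropp_involutive; apply Rmin_l).
  assert (-h2 <= (q-u)/2) by (unfold h2; rewrite Ropp_involutive; apply Rmin_r).
  assert (A1 := Hdel h1 ltac:(lra) ltac:(rewrite Rabs_right; lra)).
  assert (A2 := Hdel h2 ltac:(lra) ltac:(rewrite Rabs_left; lra)).
  rewrite (H2 (q+h1)), (H2 q) in A1 by lra.
  rewrite (H1 (q+h2)), (H1 q) in A2 by lra.
  replace ((c2 + s2 * (q + h1 - b2) - (c2 + s2 * (q - b2))) / h1) with s2 in A1 by (field; lra).
  replace ((c1 + s1 * (q + h2 - b1) - (c1 + s1 * (q - b1))) / h2) with s1 in A2 by (field; lra).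
  apply Rabs_lt_iff in A1. apply Rabs_lt_iff in A2.
  unfold Rabs in *. destruct (Rcase_abs (s1 - s2)); lra. Qed.

Lemma left_affine f q u c b sl l : u < q -> (forall s, u <= s <= q -> f s = c + sl*(s-b)) ->
  left_deriv f q l -> l = sl.
Proof. intros Hq H D. destruct (Req_dec l sl) as [|Hne]; auto. exfalso.
  assert (He : 0 < Rabs (l - sl)) by (apply Rabs_pos_neq; lra).
  destruct (D _ He) as [d [Hd Hdel]].
  set (t := q - Rmin d (q-u) / 2). assert (0 < Rmin d (q-u)) by (apply Rmin_pos; lra).
  assert (Rmin d (q-u) <= d) by apply Rmin_l. assert (Rmin d (q-u) <= q - u) by apply Rmin_r.
  assert (A := Hdel t ltac:(unfold t; lra)).
  rewrite (H t), (H q) in A by (unfold t; lra).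
  replace ((c + sl * (t - b) - (c + sl * (q - b))) / (t - q)) with sl in A by (field; unfold t; lra).
  apply Rabs_lt_iff in A. unfold Rabs in *. destruct (Rcase_abs (l - sl)); lra. Qed.

Lemma right_affine f q v c b sl l : q < v -> (forall s, q <= s <= v -> f s = c + sl*(s-b)) ->
  right_deriv f q l -> l = sl.
Proof. intros Hq H D. destruct (Req_dec l sl) as [|Hne]; auto. exfalso.
  assert (He : 0 < Rabs (l - sl)) by (apply Rabs_pos_neq; lra).
  destruct (D _ He) as [d [Hd Hdel]].
  set (t := q + Rmin d (v-q) / 2). assert (0 < Rmin d (v-q)) by (apply Rmin_pos; lra).
  assert (Rmin d (v-q) <= d) by apply Rmin_l. assert (Rmin d (v-q) <= v - q) by apply Rmin_r.
  assert (A := Hdel t ltac:(unfold t; lra)).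
  rewrite (H t), (H q) in A by (unfold t; lra).
  replace ((c + sl * (t - b) - (c + sl * (q - b))) / (t - q)) with sl in A by (field; unfold t; lra).
  apply Rabs_lt_iff in A. unfold Rabs in *. destruct (Rcase_abs (l - sl)); lra. Qed.

Definition frame (n M : nat) (Q : nat -> R) (Sl : nat -> nat -> R) (P : R -> nat -> R) : Prop :=
  (2 <= M)%nat /\ (forall m, (1 <= m)%nat -> (m < M)%nat -> Q m < Q (S m)) /\
  (forall m k q, (1 <= m)%nat -> (m < M)%nat -> (1 <= k <= n)%nat -> Q m <= q <= Q (S m) ->
      P q k = P (Q m) k + Sl m k * (q - Q m)) /\
  (forall m, (2 <= m)%nat -> (m < M)%nat -> exists k, (1 <= k <= n)%nat /\ Sl (m-1)%nat k <> Sl m k).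


Lemma fr_lt n M Q Sl P : frame n M Q Sl P -> forall i j, (1 <= i)%nat -> (i < j)%nat -> (j <= M)%nat -> Q i < Q j.
Proof. intros [_ [H _]]. apply (mono_lt Q M). auto. Qed.

Lemma fr_le n M Q Sl P : frame n M Q Sl P -> forall i j, (1 <= i)%nat -> (i <= j)%nat -> (j <= M)%nat -> Q i <= Q j.
Proof. intros F i j H1 H2 H3. destruct (Nat.eq_dec i j). subst; lra. left; eapply fr_lt; eauto; lia. Qed.

Lemma fr_locate n M Q Sl P : frame n M Q Sl P -> forall q, Q 1%nat <= q <= Q M ->
  (exists m, (1 <= m <= M)%nat /\ q = Q m) \/ (exists m, (1 <= m)%nat /\ (m < M)%nat /\ Q m < q < Q (S m)).
Proof. intros F q Hq.
  assert (forall K, (1 <= K <= M)%nat -> q <= Q K -> 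
    (exists m, (1 <= m <= K)%nat /\ q = Q m) \/ (exists m, (1 <= m)%nat /\ (m < K)%nat /\ Q m < q < Q (S m))).
  { induction K; intros HK HqK. lia. destruct (Nat.eq_dec K 0). subst. left. exists 1%nat. split. lia. lra.
    destruct (Rle_or_lt q (Q K)).
    - destruct (IHK ltac:(lia) H) as [[m Hm]|[m Hm]]; [left|right]; exists m; intuition lia.
    - destruct (Req_dec q (Q (S K))). left; exists (S K); split; auto; lia.
      right; exists K; repeat split; try lia; lra. }
  destruct F as [HM _]. apply H. lia. lra. Qed.

Lemma fr_diff_open n M Q Sl P : frame n M Q Sl P -> forall m t k, (1 <= m)%nat -> (m < M)%nat ->
  Q m < t < Q (S m) -> (1 <= k <= n)%nat -> derivable_pt_lim (fun s => P s k) t (Sl m k).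
Proof. intros F m t k H1 H2 Ht Hk. destruct F as [_ [_ [HA _]]].
  apply (d_affine _ t (P (Q m) k) (Q m) _ (Q m) (Q (S m))); auto.
  intros s Hs. apply HA; auto; lra. Qed.

Lemma fr_nondiff n M Q Sl P : frame n M Q Sl P -> forall m, (2 <= m)%nat -> (m < M)%nat -> ~ diff_at n P (Q m).
Proof. intros F m H1 H2 D. pose proof F as F'. destruct F' as [_ [Hinc [HA HK]]].
  destruct (HK m H1 H2) as [k [Hk Hne]]. destruct (D k Hk) as [l Hl].
  assert (Q (m-1)%nat < Q m) by (replace m with (S (m-1)) at 2 by lia; apply Hinc; lia).
  assert (Q m < Q (S m)) by (apply Hinc; lia).
  apply (kink (fun s => P s k) (Q m) (Q (m-1)%nat) (Q (S m)) (P (Q (m-1)%nat) k) (Q (m-1)%nat) (Sl (m-1)%nat k)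
     (P (Q m) k) (Q m) (Sl m k) l); auto.
  - intros s Hs. apply HA; try lia. replace (S (m-1)) with m by lia. lra.
  - intros s Hs. apply HA; auto; lia. Qed.

Lemma fr_local n M Q Sl P : frame n M Q Sl P -> forall q, inI (Q 1%nat) (Q M) q ->
  exists d mL mR, 0 < d /\ (1 <= mL)%nat /\ (mL < M)%nat /\ (1 <= mR)%nat /\ (mR < M)%nat /\
   Q mL <= q <= Q (S mL) /\ Q mR <= q <= Q (S mR) /\
   (forall t, inI (Q 1%nat) (Q M) t -> q - d < t < q -> Q mL < t < Q (S mL)) /\
   (forall t, inI (Q 1%nat) (Q M) t -> q < t < q + d -> Q mR < t < Q (S mR)).
Proof. intros F q Hq. pose proof (fr_lt _ _ _ _ _ F) as Hlt. pose proof F as [HM _].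
  destruct (fr_locate _ _ _ _ _ F q Hq) as [[m [Hm ->]]|[m [Hm1 [Hm2 Hm]]]].
  - destruct (Nat.eq_dec m 1) as [->|Hm1].
    + assert (Q 1%nat < Q 2%nat) by (apply Hlt; lia).
      exists (Q 2%nat - Q 1%nat), 1%nat, 1%nat. unfold inI. repeat split; try lia; try lra; intros t Ht Ht'; lra.
    + destruct (Nat.eq_dec m M) as [->|HmM].
      * assert (Q (M-1)%nat < Q M) by (apply Hlt; lia).
        exists (Q M - Q (M-1)%nat), (M-1)%nat, (M-1)%nat. replace (S (M-1)) with M by lia.
        unfold inI. repeat split; try lia; try lra; intros t Ht Ht'; unfold inI in Ht; lra.
      * assert (Q (m-1)%nat < Q m) by (apply Hlt; lia). assert (Q m < Q (S m)) by (apply Hlt; lia).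
        exists (Rmin (Q m - Q (m-1)%nat) (Q (S m) - Q m)), (m-1)%nat, m. replace (S (m-1)) with m by lia.
        assert (Hr1 := Rmin_l (Q m - Q (m-1)%nat) (Q (S m) - Q m)).
        assert (Hr2 := Rmin_r (Q m - Q (m-1)%nat) (Q (S m) - Q m)).
        repeat split; try lia; try lra. apply Rmin_pos; lra.
  - exists (Rmin (q - Q m) (Q (S m) - q)), m, m.
    assert (Hr1 := Rmin_l (q - Q m) (Q (S m) - q)). assert (Hr2 := Rmin_r (q - Q m) (Q (S m) - q)).
    repeat split; try lia; try lra. apply Rmin_pos; lra. Qed.

Lemma fr_cpl n M Q Sl P : frame n M Q Sl P -> cont_pw_linear n (Q 1%nat) (Q M) P.
Proof. intros F. pose proof F as F'. destruct F' as [HM [Hinc [HA HK]]].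
  pose proof (fr_le _ _ _ _ _ F) as Hle.
  split; [|split].
  - intros k Hk q Hq eps Heps.
    destruct (fr_local _ _ _ _ _ F q Hq) as [d [mL [mR [Hd [H1 [H2 [H3 [H4 [HqL [HqR [HL HR]]]]]]]]]]].
    set (K := Rabs (Sl mL k) + Rabs (Sl mR k) + 1).
    assert (HK0 : 0 < K) by (unfold K; pose proof (Rabs_pos (Sl mL k)); pose proof (Rabs_pos (Sl mR k)); lra).
    assert (Hp : 0 < Rmin d (eps / K)) by (apply Rmin_pos; [lra| apply Rdiv_lt_0_compat; lra]).
    exists (Rmin d (eps/K)). split; auto. intros t Ht Htq.
    assert (Hm1 := Rmin_l d (eps/K)). assert (Hm2 := Rmin_r d (eps/K)).
    assert (Hek : eps / K * K = eps) by (field; lra).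
    assert (Htq' : Rabs (t - q) * K < eps) by nra.
    destruct (Rle_or_lt t q).
    + assert (Q mL <= t <= Q (S mL)). { destruct (Req_dec t q). subst; lra.
        apply Rabs_lt_iff in Htq. assert (Hqq : q - d < t < q) by lra. specialize (HL t Ht Hqq). lra. }
      rewrite (HA mL k t), (HA mL k q) by auto.
      replace (P (Q mL) k + Sl mL k * (t - Q mL) - (P (Q mL) k + Sl mL k * (q - Q mL))) with (Sl mL k * (t - q)) by ring.
      rewrite Rabs_mult. assert (Rabs (Sl mL k) <= K) by (unfold K; pose proof (Rabs_pos (Sl mR k)); lra).
      pose proof (Rabs_pos (t - q)). nra.
    + assert (Q mR <= t <= Q (S mR)). { apply Rabs_lt_iff in Htq. assert (Hqq : q < t < q + d) by lra. specialize (HR t Ht Hqq). lra. }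
      rewrite (HA mR k t), (HA mR k q) by auto.
      replace (P (Q mR) k + Sl mR k * (t - Q mR) - (P (Q mR) k + Sl mR k * (q - Q mR))) with (Sl mR k * (t - q)) by ring.
      rewrite Rabs_mult. assert (Rabs (Sl mR k) <= K) by (unfold K; pose proof (Rabs_pos (Sl mL k)); lra).
      pose proof (Rabs_pos (t - q)). nra.
  - intros x Hx.
    destruct (fr_local _ _ _ _ _ F x Hx) as [d [mL [mR [Hd [H1 [H2 [H3 [H4 [HqL [HqR [HL HR]]]]]]]]]]].
    exists d. split; auto. intros t Ht Htx [_ Hnd].
    assert (exists m, (1 <= m)%nat /\ (m < M)%nat /\ Q m < t < Q (S m)) as [m [Hm1 [Hm2 Hm]]].
    { destruct Htx as [Ht0 Htx]. apply Rabs_lt_iff in Htx. destruct (Rle_or_lt t x).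
      - assert (t <> x). { intros ->. rewrite Rminus_diag, Rabs_R0 in Ht0. lra. }
        exists mL. repeat split; auto; apply HL; auto; lra.
      - exists mR. repeat split; auto; apply HR; auto; lra. }
    assert (Q 1%nat <= Q m) by (apply Hle; lia). assert (Q (S m) <= Q M) by (apply Hle; lia).
    destruct Hnd as [E|[E|E]]; try lra. apply E. intros k Hk. exists (Sl m k).
    eapply fr_diff_open; eauto.
  - intros q Hq Hnd.
    assert (Hn1 : q <> Q 1%nat) by (intro; apply Hnd; split; auto).
    assert (Hn2 : q <> Q M) by (intro; apply Hnd; split; auto).
    assert (D : diff_at n P q) by (destruct (classic (diff_at n P q)); auto; exfalso; apply Hnd; split; auto).
    destruct (fr_locate _ _ _ _ _ F q Hq) as [[m [Hm ->]]|[m [Hm1 [Hm2 Hm]]]].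
    + exfalso. destruct (Nat.eq_dec m 1) as [->|]; auto. destruct (Nat.eq_dec m M) as [->|]; auto.
      apply (fr_nondiff _ _ _ _ _ F m); try lia; auto.
    + exists (Rmin (q - Q m) (Q (S m) - q)). split. apply Rmin_pos; lra.
      assert (Hr1 := Rmin_l (q - Q m) (Q (S m) - q)). assert (Hr2 := Rmin_r (q - Q m) (Q (S m) - q)).
      intros t Ht k Hk l Hl. apply Rabs_lt_iff in Ht.
      assert (l = Sl m k) by (eapply uniqueness_limite; eauto; eapply fr_diff_open; eauto).
      subst. eapply fr_diff_open; eauto. lra. Qed.

Lemma fr_G2 n M Q Sl P : frame n M Q Sl P -> forall c d, Q 1%nat <= c -> c < d -> d <= Q M ->
  (forall t, c < t < d -> diff_at n P t) -> exists m, (1 <= m)%nat /\ (m < M)%nat /\ Q m <= c /\ d <= Q (S m).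
Proof. intros F c d H1 H2 H3 HD. pose proof (fr_lt _ _ _ _ _ F) as Hlt. pose proof F as [HM _].
  set (t0 := (c+d)/2).
  destruct (fr_locate _ _ _ _ _ F t0 ltac:(unfold t0; lra)) as [[m [Hm E]]|[m [Hm1 [Hm2 Hm]]]].
  - exfalso. destruct (Nat.eq_dec m 1) as [->|]. unfold t0 in E; lra. destruct (Nat.eq_dec m M) as [->|]. unfold t0 in E; lra.
    apply (fr_nondiff _ _ _ _ _ F m); try lia. rewrite <- E. apply HD. unfold t0; lra.
  - exists m. repeat split; auto.
    + destruct (Rle_or_lt (Q m) c); auto. exfalso. destruct (Nat.eq_dec m 1) as [->|]. lra.
      apply (fr_nondiff _ _ _ _ _ F m); try lia. apply HD. unfold t0 in Hm; lra.
    + destruct (Rle_or_lt d (Q (S m))); auto. exfalso. destruct (Nat.eq_dec (S m) M) as [E|]. rewrite E in H; lra.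
      apply (fr_nondiff _ _ _ _ _ F (S m)); try lia. apply HD. unfold t0 in Hm; lra. Qed.

Lemma fr_G3 n M Q Sl P : frame n M Q Sl P -> forall q, Q 1%nat < q < Q M -> ~ diff_at n P q ->
  exists m, (2 <= m)%nat /\ (m < M)%nat /\ q = Q m.
Proof. intros F q Hq HD. destruct (fr_locate _ _ _ _ _ F q ltac:(lra)) as [[m [Hm E]]|[m [Hm1 [Hm2 Hm]]]].
  - exists m. destruct (Nat.eq_dec m 1) as [->|]. lra. destruct (Nat.eq_dec m M) as [->|]. lra. repeat split; auto; lia.
  - exfalso. apply HD. intros k Hk. exists (Sl m k). eapply fr_diff_open; eauto. Qed.

Lemma fr_left n M Q Sl P : frame n M Q Sl P -> forall m k l, (2 <= m)%nat -> (m < M)%nat -> (1 <= k <= n)%nat ->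
  left_deriv (fun s => P s k) (Q m) l -> l = Sl (m-1)%nat k.
Proof. intros F m k l H1 H2 Hk D. pose proof F as [_ [Hinc [HA _]]].
  assert (Q (m-1)%nat < Q m) by (replace m with (S (m-1)) at 2 by lia; apply Hinc; lia).
  apply (left_affine (fun s => P s k) (Q m) (Q (m-1)%nat) (P (Q (m-1)%nat) k) (Q (m-1)%nat)); auto.
  intros s Hs. apply HA; try lia. replace (S (m-1)) with m by lia; lra. Qed.

Lemma fr_right n M Q Sl P : frame n M Q Sl P -> forall m k l, (1 <= m)%nat -> (m < M)%nat -> (1 <= k <= n)%nat ->
  right_deriv (fun s => P s k) (Q m) l -> l = Sl m k.
Proof. intros F m k l H1 H2 Hk D. pose proof F as [_ [Hinc [HA _]]].
  assert (Q m < Q (S m)) by (apply Hinc; lia).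
  apply (right_affine (fun s => P s k) (Q m) (Q (S m)) (P (Q m) k) (Q m)); auto.
  Qed.

Definition Qd n a m := if (m <=? n)%nat then qlow n a m else qhigh n a (m - n + 1).
Definition b1 n m := if (m <=? n-1)%nat then S m else 1%nat.
Definition b2 n m := if (m <=? n-1)%nat then n else (m - n + 1)%nat.
Definition Sld n m k := if andb (b1 n m <=? k)%nat (k <=? b2 n m)%nat then 1 / INR (b2 n m - b1 n m + 1) else 0.

Lemma b1_lo n m : (m <= n-1)%nat -> b1 n m = S m.
Proof. intros H. unfold b1. rewrite (proj2 (Nat.leb_le _ _) H). auto. Qed.
Lemma b2_lo n m : (m <= n-1)%nat -> b2 n m = n.
Proof. intros H. unfold b2. rewrite (proj2 (Nat.leb_le _ _) H). auto. Qed.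
Lemma b1_hi n m : (n-1 < m)%nat -> b1 n m = 1%nat.
Proof. intros H. unfold b1. rewrite (proj2 (Nat.leb_gt _ _) H). auto. Qed.
Lemma b2_hi n m : (n-1 < m)%nat -> b2 n m = (m - n + 1)%nat.
Proof. intros H. unfold b2. rewrite (proj2 (Nat.leb_gt _ _) H). auto. Qed.
Lemma Sld_in n m k : (b1 n m <= k <= b2 n m)%nat -> Sld n m k = 1 / INR (b2 n m - b1 n m + 1).
Proof. intros [H1 H2]. unfold Sld. rewrite (proj2 (Nat.leb_le _ _) H1), (proj2 (Nat.leb_le _ _) H2). auto. Qed.
Lemma Sld_out n m k : ~ (b1 n m <= k <= b2 n m)%nat -> Sld n m k = 0.
Proof. intros H. unfold Sld. destruct (Nat.leb_spec (b1 n m) k); destruct (Nat.leb_spec k (b2 n m)); simpl; auto.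
  exfalso; apply H; lia. Qed.

Lemma inv_INR_pos x : (1 <= x)%nat -> 0 < 1 / INR x.
Proof. intros. apply Rdiv_lt_0_compat. lra. apply lt_0_INR. lia. Qed.

Lemma qlow_n n a : in_Delta n a -> qlow n a n = 1.
Proof. intros [_ [_ Hs]]. unfold qlow. rewrite Nat.sub_diag. simpl INR. lra. Qed.
Lemma qhigh_1 n a : in_Delta n a -> qhigh n a 1 = 1.
Proof. intros [_ [_ Hs]]. unfold qhigh, sum_range. simpl. lra. Qed.
Lemma Qd_lo n a m : (m <= n)%nat -> Qd n a m = qlow n a m.
Proof. intros H. unfold Qd. rewrite (proj2 (Nat.leb_le _ _) H). auto. Qed.
Lemma Qd_hi n a m : in_Delta n a -> (n <= m)%nat -> Qd n a m = qhigh n a (m - n + 1).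
Proof. intros Ha H. unfold Qd. destruct (Nat.leb_spec m n); auto.
  assert (m = n) by lia. subst. rewrite Nat.sub_diag. simpl. rewrite qlow_n, qhigh_1; auto. Qed.

Lemma qlow_step n a m : (1 <= m)%nat -> (m < n)%nat -> qlow n a (S m) - qlow n a m = INR (n-m) * (a (S m) - a m).
Proof. intros. unfold qlow. simpl sum_to. replace (n - m)%nat with (S (n - S m)) by lia. rewrite S_INR. ring. Qed.
Lemma qhigh_step n a i : (1 <= i)%nat -> qhigh n a (S i) - qhigh n a i = INR i * (a (S i) - a i).
Proof. intros. unfold qhigh, sum_range. destruct i as [|i']; [lia|].
  replace (S (S i') - 1)%nat with (S i') by lia. replace (S i' - 1)%nat with i' by lia. simpl sum_to. rewrite S_INR. ring. Qed.

Lemma a_lt n a : in_Delta n a -> forall k k', (1 <= k)%nat -> (k < k')%nat -> (k' <= n)%nat -> a k < a k'.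
Proof. intros [_ [H _]]. apply mono_lt; auto. Qed.
Lemma a_le n a : in_Delta n a -> forall k k', (1 <= k)%nat -> (k <= k')%nat -> (k' <= n)%nat -> a k <= a k'.
Proof. intros Ha k k' H1 H2 H3. destruct (Nat.eq_dec k k'). subst; lra. left; eapply a_lt; eauto; lia. Qed.
Lemma a_pos n a : in_Delta n a -> forall k, (1 <= k <= n)%nat -> 0 < a k.
Proof. intros Ha k Hk. pose proof Ha as [H0 _]. assert (a 1%nat <= a k) by (apply (a_le n); auto; lia). lra. Qed.

Lemma Qd_step n a m : (2 <= n)%nat -> in_Delta n a -> (1 <= m)%nat -> (m < 2*n-1)%nat -> Qd n a m < Qd n a (S m).
Proof. intros Hn Ha H1 H2. destruct (Nat.lt_ge_cases m n).
  - rewrite !Qd_lo by lia. assert (H3 := qlow_step n a m H1 H).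
    assert (a m < a (S m)) by (apply (a_lt n); auto; lia). assert (0 < INR (n - m)) by (apply lt_0_INR; lia). nra.
  - rewrite !Qd_hi by (auto; lia). replace (S m - n + 1)%nat with (S (m - n + 1)) by lia.
    assert (H3 := qhigh_step n a (m - n + 1) ltac:(lia)).
    assert (a (m-n+1)%nat < a (S (m-n+1))) by (apply (a_lt n); auto; lia). assert (0 < INR (m - n + 1)) by (apply lt_0_INR; lia). nra. Qed.

Lemma Qd_affine n a P : (2 <= n)%nat -> in_Delta n a -> P_conditions n a P ->
  forall m k q, (1 <= m)%nat -> (m < 2*n-1)%nat -> (1 <= k <= n)%nat -> Qd n a m <= q <= Qd n a (S m) ->
      P q k = P (Qd n a m) k + Sld n m k * (q - Qd n a m).
Proof. intros Hn Ha [HPi HPii] m k q H1 H2 Hk Hq. destruct (Nat.lt_ge_cases m n).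
  - rewrite !Qd_lo in * by lia. pose proof (Qd_step n a m Hn Ha H1 H2) as Hs. rewrite !Qd_lo in Hs by lia.
    destruct (HPi m H1 ltac:(lia) q Hq) as [A1 A2]. destruct (HPi m H1 ltac:(lia) (qlow n a m) ltac:(lra)) as [B1 B2].
    destruct (Nat.le_gt_cases k m).
    + rewrite A1, B1 by lia. rewrite Sld_out. ring. rewrite b1_lo by lia. lia.
    + rewrite A2, B2 by lia. rewrite Sld_in; rewrite ?b1_lo, ?b2_lo by lia; try lia.
      replace (n - S m + 1)%nat with (n - m)%nat by lia. assert (0 < INR (n - m)) by (apply lt_0_INR; lia). field. lra.
  - pose proof (Qd_step n a m Hn Ha H1 H2) as Hs. rewrite !Qd_hi in * by (auto; lia).
    replace (S m - n + 1)%nat with (S (m - n + 1)) in * by lia.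
    destruct (HPii (m-n+1)%nat ltac:(lia) ltac:(lia) q Hq) as [A1 A2].
    destruct (HPii (m-n+1)%nat ltac:(lia) ltac:(lia) (qhigh n a (m-n+1)) ltac:(lra)) as [B1 B2].
    destruct (Nat.le_gt_cases k (m-n+1)).
    + rewrite A1, B1 by lia. rewrite Sld_in; rewrite ?b1_hi, ?b2_hi by lia; try lia.
      replace (m - n + 1 - 1 + 1)%nat with (m - n + 1)%nat by lia. assert (0 < INR (m - n + 1)) by (apply lt_0_INR; lia). field. lra.
    + rewrite A2, B2 by lia. rewrite Sld_out. ring. rewrite b2_hi by lia. lia. Qed.

Lemma Qd_kink n : (2 <= n)%nat -> forall m, (2 <= m)%nat -> (m < 2*n-1)%nat ->
  exists k, (1 <= k <= n)%nat /\ Sld n (m-1)%nat k <> Sld n m k.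
Proof. intros Hn m H1 H2. destruct (Nat.lt_ge_cases m n).
  - exists m. split. lia. rewrite (Sld_in n (m-1)); rewrite ?b1_lo, ?b2_lo by lia; try lia.
    rewrite Sld_out by (rewrite b1_lo by lia; lia). pose proof (inv_INR_pos (n - S (m - 1) + 1) ltac:(lia)). lra.
  - destruct (Nat.eq_dec m n) as [->|].
    + exists n. split. lia. rewrite (Sld_in n (n-1)); rewrite ?b1_lo, ?b2_lo by lia; try lia.
      rewrite Sld_out by (rewrite b1_hi, b2_hi by lia; lia). pose proof (inv_INR_pos (n - S (n - 1) + 1) ltac:(lia)). lra.
    + exists (m - n + 1)%nat. split. lia. rewrite (Sld_in n m); rewrite ?b1_hi, ?b2_hi by lia; try lia.
      rewrite Sld_out by (rewrite b1_hi, b2_hi by lia; lia). pose proof (inv_INR_pos (m - n + 1 - 1 + 1) ltac:(lia)). lra. Qed.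

Lemma Qd_frame n a P : (2 <= n)%nat -> in_Delta n a -> P_conditions n a P -> frame n (2*n-1) (Qd n a) (Sld n) P.
Proof. intros Hn Ha HP. split; [lia|]. split. intros; apply Qd_step; auto.
  split. intros; apply Qd_affine; auto. intros; apply Qd_kink; auto. Qed.

Lemma fr_piece n M Q Sl P : frame n M Q Sl P -> forall q, Q 1%nat <= q <= Q M ->
  exists m, (1 <= m)%nat /\ (m < M)%nat /\ Q m <= q <= Q (S m).
Proof. intros F q Hq. pose proof (fr_le _ _ _ _ _ F) as Hle. pose proof F as [HM _].
  destruct (fr_locate _ _ _ _ _ F q Hq) as [[m [Hm ->]]|[m [Hm1 [Hm2 Hm]]]].
  - destruct (Nat.eq_dec m M) as [->|].
    + exists (M-1)%nat. replace (S (M-1)) with M by lia. split. lia. split. lia. split; [apply Hle|]; lia || lra.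
    + exists m. split. lia. split. lia. split. lra. apply Hle; lia.
  - exists m. repeat split; auto; lra. Qed.

Lemma region n a P : (2 <= n)%nat -> in_Delta n a -> P_conditions n a P -> forall q,
  Qd n a 1 <= q <= Qd n a (2*n-1) ->
  (exists i, (1 <= i <= n-1)%nat /\ qlow n a i <= q <= qlow n a (S i)) \/
  (exists i, (1 <= i <= n-1)%nat /\ qhigh n a i <= q <= qhigh n a (S i)).
Proof. intros Hn Ha HP q Hq. destruct (fr_piece _ _ _ _ _ (Qd_frame n a P Hn Ha HP) q Hq) as [m [H1 [H2 H3]]].
  destruct (Nat.lt_ge_cases m n).
  - left. exists m. rewrite !Qd_lo in H3 by lia. split; auto; lia.
  - right. exists (m-n+1)%nat. rewrite !Qd_hi in H3 by (auto; lia). replace (S m - n + 1)%nat with (S (m - n + 1)) in H3 by lia.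
    split; auto; lia. Qed.

Lemma xbounds n a i q : in_Delta n a -> (1 <= i)%nat -> (i < n)%nat -> qlow n a i <= q <= qlow n a (S i) ->
  a i <= a i + (q - qlow n a i) / INR (n - i) <= a (S i).
Proof. intros Ha H1 H2 Hq. pose proof (qlow_step n a i H1 H2). assert (0 < INR (n-i)) by (apply lt_0_INR; lia).
  set (x := a i + (q - qlow n a i) / INR (n - i)). assert (INR (n-i) * (x - a i) = q - qlow n a i) by (unfold x; field; lra).
  nra. Qed.

Lemma ybounds n a i q : in_Delta n a -> (1 <= i)%nat -> qhigh n a i <= q <= qhigh n a (S i) ->
  a i <= a i + (q - qhigh n a i) / INR i <= a (S i).
Proof. intros Ha H1 Hq. pose proof (qhigh_step n a i H1). assert (0 < INR i) by (apply lt_0_INR; lia).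
  set (x := a i + (q - qhigh n a i) / INR i). assert (INR i * (x - a i) = q - qhigh n a i) by (unfold x; field; lra).
  nra. Qed.

Lemma G1_lemma n a P : (2 <= n)%nat -> in_Delta n a -> P_conditions n a P -> forall q,
  Qd n a 1 <= q <= Qd n a (2*n-1) ->
  0 <= P q 1%nat /\ (forall k, (1 <= k)%nat -> (k < n)%nat -> P q k <= P q (S k)) /\ sum_to (P q) n = q.
Proof. intros Hn Ha HP q Hq. pose proof HP as [HPi HPii]. pose proof (a_pos n a Ha) as Hpos.
  destruct (region n a P Hn Ha HP q Hq) as [[i [Hi Hq']]|[i [Hi Hq']]].
  - destruct (HPi i ltac:(lia) ltac:(lia) q Hq') as [A1 A2]. pose proof (xbounds n a i q Ha ltac:(lia) ltac:(lia) Hq') as Hx.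
    set (x := a i + (q - qlow n a i) / INR (n - i)) in *.
    split; [|split].
    + rewrite A1 by lia. left; apply Hpos; lia.
    + intros k H1 H2. destruct (Nat.lt_ge_cases k i).
      * rewrite !A1 by lia. apply (a_le n); auto; lia.
      * destruct (Nat.eq_dec k i) as [->|]. rewrite A1, A2 by lia. lra. rewrite !A2 by lia. lra.
    + assert (E1 : sum_to (P q) i = sum_to a i) by (apply sum_to_ext; intros; apply A1; lia).
      assert (E2 : sum_to (P q) (i + (n-i)) - sum_to (P q) i = INR (n-i) * x) by (apply sum_tail_const; intros; apply A2; lia).
      replace (i + (n-i))%nat with n in E2 by lia. assert (0 < INR (n-i)) by (apply lt_0_INR; lia).
      assert (sum_to (P q) n = sum_to a i + INR (n-i) * x) by lra. rewrite H0. unfold x, qlow. field. lra.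
  - destruct (HPii i ltac:(lia) ltac:(lia) q Hq') as [A1 A2]. pose proof (ybounds n a i q Ha ltac:(lia) Hq') as Hx.
    set (x := a i + (q - qhigh n a i) / INR i) in *.
    split; [|split].
    + rewrite A1 by lia. assert (0 < a i) by (apply Hpos; lia). lra.
    + intros k H1 H2. destruct (Nat.lt_ge_cases k i).
      * rewrite !A1 by lia. lra.
      * destruct (Nat.eq_dec k i) as [->|]. rewrite A1, A2 by lia. lra. rewrite !A2 by lia. apply (a_le n); auto; lia.
    + assert (E1 : sum_to (P q) i = INR i * x) by (rewrite <- sum_to_const; apply sum_to_ext; intros; apply A1; lia).
      assert (E2 : sum_to (P q) (i + (n-i)) - sum_to (P q) i = sum_to a (i + (n-i)) - sum_to a i) by (apply sum_tail_ext; intros; apply A2; lia).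
      replace (i + (n-i))%nat with n in E2 by lia. assert (0 < INR i) by (apply lt_0_INR; lia).
      assert (sum_to (P q) n = INR i * x + sum_to a n - sum_to a i) by lra. rewrite H0. unfold x, qhigh, sum_range.
      destruct i as [|i']; [lia|]. replace (S i' - 1)%nat with i' by lia. simpl sum_to. rewrite S_INR. pose proof (pos_INR i'). field. lra. Qed.

Lemma block_eq n a P : (2 <= n)%nat -> in_Delta n a -> P_conditions n a P ->
  forall m k q, (1 <= m)%nat -> (m < 2*n-1)%nat -> (b1 n m <= k <= b2 n m)%nat -> Qd n a m <= q <= Qd n a (S m) ->
  P q k = P q (b1 n m).
Proof. intros Hn Ha [HPi HPii] m k q H1 H2 Hk Hq. destruct (Nat.lt_ge_cases m n).
  - rewrite !Qd_lo in Hq by lia. rewrite b1_lo, b2_lo in * by lia.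
    destruct (HPi m H1 ltac:(lia) q Hq) as [A1 A2]. rewrite !A2 by lia. auto.
  - rewrite !Qd_hi in Hq by (auto; lia). replace (S m - n + 1)%nat with (S (m - n + 1)) in Hq by lia.
    rewrite b1_hi, b2_hi in * by lia.
    destruct (HPii (m-n+1)%nat ltac:(lia) ltac:(lia) q Hq) as [A1 A2]. rewrite !A1 by lia. auto. Qed.

Lemma key_lower n j (a v : nat -> R) rho : (j <= n)%nat -> (forall k, (1 <= k <= n)%nat -> 0 <= a k) ->
  sum_to a n = 1 -> 0 <= rho -> (forall k, (1 <= k <= j)%nat -> rho * a k <= v k) ->
  (forall k, (j < k <= n)%nat -> v k <= rho * a k) -> sum_to a j * sum_to v n <= sum_to v j.
Proof. intros Hj Ha Hs Hr H1 H2.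
  assert (Z : forall m, sum_to (fun _ => 0) m = 0) by (intros; rewrite sum_to_const; ring).
  assert (S1 : 0 <= sum_to a j) by (rewrite <- (Z j); apply sum_to_le; intros; apply Ha; lia).
  pose proof (sum_tail_le (fun _ => 0) a j (n-j) ltac:(intros; apply Ha; lia)) as T1.
  pose proof (sum_to_le (fun k => rho * a k) v j H1) as T2. rewrite sum_to_scal in T2.
  pose proof (sum_tail_le v (fun k => rho * a k) j (n-j) ltac:(intros; apply H2; lia)) as T3.
  rewrite !sum_to_scal in T3. rewrite !Z in T1. replace (j + (n-j))%nat with n in * by lia.
  set (Sa := sum_to a j) in *. set (Sv := sum_to v j) in *. set (Ta := sum_to a n - Sa).
  set (Tv := sum_to v n - Sv). assert (sum_to v n = Sv + Tv) by (unfold Tv; ring).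
  assert (Sa + Ta = 1) by (unfold Ta; lra). rewrite H.
  assert (Sa * Tv <= Sa * (rho * Ta)) by (apply Rmult_le_compat_l; auto; unfold Tv, Ta; lra).
  assert (rho * Sa * Ta <= Sv * Ta) by (apply Rmult_le_compat_r; unfold Ta; lra). nra. Qed.

Lemma key_upper n j (v : nat -> R) : (1 <= j <= n)%nat -> (forall k, (1 <= k)%nat -> (k < n)%nat -> v k <= v (S k)) ->
  INR n * sum_to v j <= INR j * sum_to v n.
Proof. intros Hj Hm. pose proof (mono_le v n Hm) as M.
  pose proof (sum_to_le v (fun _ => v j) j ltac:(intros; apply M; lia)) as T1. rewrite sum_to_const in T1.
  pose proof (sum_tail_le (fun _ => v j) v j (n-j) ltac:(intros; apply M; lia)) as T2.
  rewrite (sum_tail_const (fun _ => v j) (v j) j (n-j)) in T2 by auto.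
  replace (j + (n-j))%nat with n in T2 by lia.
  assert (E : INR n = INR j + INR (n-j)) by (rewrite <- plus_INR; f_equal; lia). rewrite E.
  pose proof (pos_INR j). pose proof (pos_INR (n-j)).
  assert (INR (n-j) * sum_to v j <= INR (n-j) * (INR j * v j)) by (apply Rmult_le_compat_l; auto).
  assert (INR j * (INR (n-j) * v j) <= INR j * (sum_to v n - sum_to v j)) by (apply Rmult_le_compat_l; auto). nra. Qed.

Lemma ratio1 d e x : 0 < d -> 0 <= e -> x <= d -> x / d * e <= e.
Proof. intros. set (t := x / d). assert (t * d = x) by (unfold t; field; lra). nra. Qed.
Lemma ratio2 d e x : 0 < d -> 0 <= x -> e <= d -> x / d * e <= x.
Proof. intros. set (t := x / d). assert (t * d = x) by (unfold t; field; lra). assert (0 <= t) by nra. nra. Qed.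
Lemma ratio3 d e x : 0 < d -> 0 <= x -> d <= e -> x <= x / d * e.
Proof. intros. set (t := x / d). assert (t * d = x) by (unfold t; field; lra). assert (0 <= t) by nra. nra. Qed.
Lemma ratio4 d e x : 0 < d -> d <= x -> 0 <= e -> e <= x / d * e.
Proof. intros. set (t := x / d). assert (t * d = x) by (unfold t; field; lra). assert (1 <= t) by nra. nra. Qed.

Lemma lower_bound n a P : (2 <= n)%nat -> in_Delta n a -> P_conditions n a P -> forall j q,
  (1 <= j <= n - 1)%nat -> Qd n a 1 <= q <= Qd n a (2*n-1) -> sum_to a j * q <= sum_to (P q) j.
Proof. intros Hn Ha HP j q Hj Hq. pose proof HP as [HPi HPii]. pose proof (a_pos n a Ha) as Hpos.
  pose proof (a_le n a Ha) as Hle.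
  destruct (G1_lemma n a P Hn Ha HP q Hq) as [_ [_ Hsum]]. rewrite <- Hsum at 1.
  assert (Ha0 : forall k, (1 <= k <= n)%nat -> 0 <= a k) by (intros; left; apply Hpos; auto).
  assert (Hs : sum_to a n = 1) by (destruct Ha as [_ [_ Hs]]; auto).
  assert (Haj := Hpos j ltac:(lia)).
  destruct (region n a P Hn Ha HP q Hq) as [[i [Hi Hq']]|[i [Hi Hq']]].
  - destruct (HPi i ltac:(lia) ltac:(lia) q Hq') as [A1 A2]. pose proof (xbounds n a i q Ha ltac:(lia) ltac:(lia) Hq') as Hx.
    set (x := a i + (q - qlow n a i) / INR (n - i)) in *.
    assert (0 < a i) by (apply Hpos; lia).
    destruct (Nat.le_gt_cases j i).
    + apply (key_lower n j a (P q) 1); auto; try lia; try lra.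
      * intros k Hk. rewrite A1 by lia. lra.
      * intros k Hk. destruct (Nat.le_gt_cases k i). rewrite A1 by lia. lra.
        rewrite A2 by lia. assert (a (S i) <= a k) by (apply Hle; lia). lra.
    + apply (key_lower n j a (P q) (x / a j)); auto; try lia.
      * unfold Rdiv; apply Rmult_le_pos; [lra| left; apply Rinv_0_lt_compat; lra].
      * intros k Hk. destruct (Nat.le_gt_cases k i).
        -- rewrite A1 by lia. assert (a (S i) <= a j) by (apply Hle; lia). apply ratio1; try lra; try (apply Ha0; lia).
        -- rewrite A2 by lia. apply ratio2; try lra; try (apply Hle; lia).
      * intros k Hk. rewrite A2 by lia. apply ratio3; try lra; try (apply Hle; lia).
  - destruct (HPii i ltac:(lia) ltac:(lia) q Hq') as [A1 A2]. pose proof (ybounds n a i q Ha ltac:(lia) Hq') as Hx.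
    set (x := a i + (q - qhigh n a i) / INR i) in *.
    assert (0 < a i) by (apply Hpos; lia).
    destruct (Nat.le_gt_cases j i).
    + apply (key_lower n j a (P q) (x / a j)); auto; try lia.
      * unfold Rdiv; apply Rmult_le_pos; [lra| left; apply Rinv_0_lt_compat; lra].
      * intros k Hk. rewrite A1 by lia. apply ratio2; try lra; try (apply Hle; lia).
      * intros k Hk. destruct (Nat.le_gt_cases k i).
        -- rewrite A1 by lia. apply ratio3; try lra; try (apply Hle; lia).
        -- rewrite A2 by lia. assert (a j <= a i) by (apply Hle; lia). apply ratio4; try lra; try (apply Ha0; lia).
    + apply (key_lower n j a (P q) 1); auto; try lia; try lra.
      * intros k Hk. destruct (Nat.le_gt_cases k i).
        -- rewrite A1 by lia. assert (a k <= a i) by (apply Hle; lia). lra.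
        -- rewrite A2 by lia. lra.
      * intros k Hk. rewrite A2 by lia. lra. Qed.

Theorem mainTheorem8 (n : nat) (a : nat -> R) (P : R -> nat -> R) :
  (2 <= n)%nat ->
  in_Delta n a ->
  P_conditions n a P ->
  gen_n_system n (INR n * a 1%nat) (INR n * a n) P /\
  (forall j, (1 <= j)%nat -> (j <= n - 1)%nat ->
     is_glb (fun x => exists q, INR n * a 1%nat <= q <= INR n * a n /\
                         x = psi j (fun k => / q * P q k))
            (psi j a) /\
     is_lub (fun x => exists q, INR n * a 1%nat <= q <= INR n * a n /\
                         x = psi j (fun k => / q * P q k))
            (INR j / INR n)).
Proof.
  intros Hn Ha HP. pose proof (Qd_frame n a P Hn Ha HP) as F. pose proof HP as [HPi HPii].
  pose proof (a_pos n a Ha) as Hpos.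
  assert (EA : INR n * a 1%nat = Qd n a 1). { rewrite Qd_lo by lia. unfold qlow. simpl sum_to.
    rewrite minus_INR by lia. simpl INR. ring. }
  assert (EB : INR n * a n = Qd n a (2*n-1)). { rewrite Qd_hi by (auto; lia). replace (2*n-1-n+1)%nat with n by lia.
    unfold qhigh, sum_range. destruct n as [|n']; [lia|]. replace (S n' - 1)%nat with n' by lia. simpl sum_to.
    rewrite S_INR. ring. }
  rewrite EA, EB.
  assert (HA0 : 0 < Qd n a 1) by (rewrite <- EA; assert (0 < a 1%nat) by (apply Hpos; lia);
     assert (0 < INR n) by (apply lt_0_INR; lia); nra).
  split.
  - split; [|split; [|split]].
    + apply (fr_cpl _ _ _ _ _ F).
    + intros q Hq. apply (G1_lemma n a P); auto.
    + intros c d Hc Hcd Hd HD. destruct (fr_G2 _ _ _ _ _ F c d Hc Hcd Hd HD) as [m [H1 [H2 [H3 H4]]]].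
      assert (Hb : (1 <= b1 n m)%nat /\ (b1 n m <= b2 n m)%nat /\ (b2 n m <= n)%nat).
      { destruct (Nat.lt_ge_cases m n). rewrite b1_lo, b2_lo by lia. lia. rewrite b1_hi, b2_hi by lia. lia. }
      exists (b1 n m), (b2 n m). split; [lia|]. split; [lia|]. split; [lia|]. split; [|split].
      * intros k t Hk Ht. apply (block_eq n a P Hn Ha HP m k t); auto. lra.
      * intros k t Hk Ht. rewrite <- (Sld_in n m k Hk). apply (fr_diff_open _ _ _ _ _ F); auto. lra. lia.
      * intros k t t' Hk Hnk Ht Ht'. rewrite (Qd_affine n a P Hn Ha HP m k t), (Qd_affine n a P Hn Ha HP m k t'); auto; try lra.
        rewrite Sld_out by auto. ring.
    + intros q Hq HD r1 r2 s1 s2 Hr1 Hr12 Hr2 Hs1 Hs12 Hs2 HL HR Hrs j Hj.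
      destruct (fr_G3 _ _ _ _ _ F q Hq HD) as [m [Hm1 [Hm2 ->]]].
      assert (EL := fr_left _ _ _ _ _ F m r1 _ Hm1 Hm2 ltac:(lia) (HL r1 ltac:(lia))).
      assert (ER := fr_right _ _ _ _ _ F m s2 _ ltac:(lia) Hm2 ltac:(lia) (HR s2 ltac:(lia))).
      assert (InL : (b1 n (m-1) <= r1 <= b2 n (m-1))%nat).
      { destruct (classic (b1 n (m-1) <= r1 <= b2 n (m-1))%nat) as [|Hno]; auto. rewrite Sld_out in EL by auto.
        pose proof (inv_INR_pos (r2 - r1 + 1) ltac:(lia)). lra. }
      assert (InR : (b1 n m <= s2 <= b2 n m)%nat).
      { destruct (classic (b1 n m <= s2 <= b2 n m)%nat) as [|Hno]; auto. rewrite Sld_out in ER by auto.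
        pose proof (inv_INR_pos (s2 - s1 + 1) ltac:(lia)). lra. }
      pose proof (fr_le _ _ _ _ _ F) as Hle.
      destruct (Nat.lt_ge_cases m n).
      * rewrite b1_lo, b2_lo in InL by lia. rewrite b2_lo in InR by lia.
        assert (Hqq : Qd n a (m-1)%nat <= Qd n a m <= Qd n a (S (m-1))).
        { replace (S (m-1)) with m by lia. split; [apply Hle|]; lia || lra. }
        rewrite (block_eq n a P Hn Ha HP (m-1) j (Qd n a m)), (block_eq n a P Hn Ha HP (m-1) r1 (Qd n a m)); auto; try lia;
          rewrite ?b1_lo, ?b2_lo by lia; lia.
      * destruct (Nat.eq_dec m n) as [->|].
        -- rewrite b1_lo in InL by lia. rewrite b2_hi in InR by lia. lia.
        -- rewrite b1_hi, b2_hi in InR by lia. rewrite b1_hi in InL by lia.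
           assert (Hqq : Qd n a m <= Qd n a m <= Qd n a (S m)) by (split; [lra|]; apply Hle; lia).
           rewrite (block_eq n a P Hn Ha HP m j (Qd n a m)), (block_eq n a P Hn Ha HP m r1 (Qd n a m)); auto; try lia;
             rewrite ?b1_hi, ?b2_hi by lia; lia.
  - intros j Hj1 Hj2.
    assert (Hval : forall q, psi j (fun k => / q * P q k) = / q * sum_to (P q) j) by (intros; unfold psi; apply sum_to_scal).
    assert (E1 : qhigh n a 1 = 1) by (apply qhigh_1; auto).
    assert (Hone : forall k, (1 <= k <= n)%nat -> P 1 k = a k).
    { intros k Hk. pose proof (qhigh_step n a 1 ltac:(lia)) as Hst.
      assert (a 1%nat < a 2%nat) by (apply (a_lt n); auto; lia). simpl INR in Hst.
      rewrite <- E1. destruct (HPii 1%nat ltac:(lia) ltac:(lia) (qhigh n a 1) ltac:(lra)) as [B1 B2].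
      destruct (Nat.le_gt_cases k 1). rewrite B1 by lia. replace k with 1%nat by lia.
      replace (qhigh n a 1 - qhigh n a 1) with 0 by ring. unfold Rdiv; ring. apply B2; lia. }
    assert (Hin1 : Qd n a 1 <= 1 <= Qd n a (2*n-1)).
    { pose proof (fr_le _ _ _ _ _ F) as Hle. rewrite <- (qlow_n n a Ha). rewrite <- (Qd_lo n a n) by lia.
      split; apply Hle; lia. }
    assert (HA1 : forall k, (1 <= k <= n)%nat -> P (Qd n a 1) k = a 1%nat).
    { intros k Hk. rewrite Qd_lo by lia. pose proof (Qd_step n a 1 Hn Ha ltac:(lia) ltac:(lia)) as Hs. rewrite !Qd_lo in Hs by lia.
      destruct (HPi 1%nat ltac:(lia) ltac:(lia) (qlow n a 1) ltac:(lra)) as [B1 B2].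
      destruct (Nat.le_gt_cases k 1). rewrite B1 by lia. replace k with 1%nat by lia. auto.
      rewrite B2 by lia. replace (qlow n a 1 - qlow n a 1) with 0 by ring. unfold Rdiv; ring. }
    split; split.
    + intros x [q [Hq ->]]. rewrite Hval. pose proof (lower_bound n a P Hn Ha HP j q ltac:(lia) Hq).
      assert (0 < q) by lra. apply (Rmult_le_reg_l q); auto. rewrite <- Rmult_assoc, Rinv_r, Rmult_1_l by lra. unfold psi. lra.
    + intros b Hb. apply Hb. exists 1. split; auto. rewrite Hval. rewrite Rinv_1, Rmult_1_l. unfold psi.
      apply sum_to_ext. intros; symmetry; apply Hone; lia.
    + intros x [q [Hq ->]]. rewrite Hval. destruct (G1_lemma n a P Hn Ha HP q Hq) as [_ [Hm Hs]].
      pose proof (key_upper n j (P q) ltac:(lia) Hm) as K. rewrite Hs in K. assert (0 < q) by lra.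
      assert (0 < INR n) by (apply lt_0_INR; lia).
      assert (E : INR j / INR n - / q * sum_to (P q) j = (INR j * q - INR n * sum_to (P q) j) / (INR n * q)) by (field; lra).
      assert (0 <= (INR j * q - INR n * sum_to (P q) j) / (INR n * q)).
      { unfold Rdiv; apply Rmult_le_pos; [lra| left; apply Rinv_0_lt_compat; nra]. }
      lra.
    + intros b Hb. apply Hb. exists (Qd n a 1). split. split; [lra|]. apply (fr_le _ _ _ _ _ F); lia.
      rewrite Hval. rewrite (sum_to_ext _ (fun _ => a 1%nat)) by (intros; apply HA1; lia).
      rewrite sum_to_const. rewrite <- EA. assert (0 < a 1%nat) by (apply Hpos; lia).
      assert (0 < INR n) by (apply lt_0_INR; lia). field. lra.
Qed.
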